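(* Suppose $\{\mathcal{G}_k\}$ is uniformly jointly strongly connected with constant $B\ge1$. Then an algorithm in $\mathcal{A}_{\rm ave}$ achieves global asymptotic consensus if either $$\sum_{s=0}^\infty\ \prod_{k=s(n-1)B}^{(s+1)(n-1)B-1}\alpha_k=\infty$$ or $$\sum_{s=0}^\infty\ \prod_{k=s(n-1)B}^{(s+1)(n-1)B-1}(1-\alpha_k-\eta_k)=\infty.$$
   Context: Network of nodes $\mathcal{V}=\{1,\dots,n\}$, $n\ge 3$, discrete time, states $x_i(k)\in\mathbb{R}$. At each time $k$ a digraph $\mathcal{G}_k=(\mathcal{V},\mathcal{E}_k)$ is given; $j$ is a neighbor of $i$ at time $k$ if $(j,i)\in\mathcal{E}_k$, every node is always its own neighbor; $\mathcal{N}_i(k)$ is the neighbor set. The algorithm is $$x_i(k+1)=\eta_k x_i(k)+\alpha_k\min_{j\in\mathcal{N}_i(k)}x_j(k)+(1-\eta_k-\alpha_k)\max_{j\in\mathcal{N}_i(k)}x_j(k),$$ with node-independent parameters; $\mathcal{A}_{\rm ave}$ consists of those with $\eta_k\in(0,1]$, $\alpha_k\in[0,1-\eta_k]$ for all $k$. Global asymptotic consensus: for every initial time $k_0\ge0$ and initial value $x(k_0)=x^0\in\mathbb{R}^n$ there is $z_*$ with $x_i(k)\to z_*$ for all $i$. A digraph is strongly connected if every node is reachable from every other node by a directed path. $\mathcal{G}([k_1,k_2])=(\mathcal{V},\cup_{k\in[k_1,k_2]}\mathcal{E}_k)$. $\{\mathcal{G}_k\}$ is uniformly jointly strongly connected if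 there is an integer $B\ge1$ with $\mathcal{G}([k,k+B-1])$ strongly connected for all $k\ge0$. *)

(* Defs.v *)
From Stdlib Require Import Reals Lra Lia List.
Import ListNotations.
Open Scope R_scope.

(* Nodes are 0..n-1. A time-varying digraph: E k j i = true iff (j,i) is an
   edge of G_k. Self loops are always treated as present (see neighbors). *)
Definition graph_seq := nat -> nat -> nat -> bool.

Definition neighbors (n : nat) (E : graph_seq) (k i : nat) : list nat :=
  i :: filter (fun j => E k j i) (seq 0 n).

Definition nbr_min (n : nat) (E : graph_seq) (k i : nat) (x : nat -> R) : R :=
  fold_right (fun j acc => Rmin (x j) acc) (x i) (neighbors n E k i).

Definition nbr_max (n : nat) (E : graph_seq) (k i : nat) (x : nat -> R) : R :=
  fold_right (fun j acc => Rmax (x j) acc) (x i) (neighbors n E k i).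

Definition step (n : nat) (E : graph_seq) (eta alpha : nat -> R) (k : nat)
  (x : nat -> R) : nat -> R :=
  fun i => eta k * x i + alpha k * nbr_min n E k i x
           + (1 - eta k - alpha k) * nbr_max n E k i x.

(* trajectory started at time k0 with x(k0) = x0: traj ... t = x(k0 + t) *)
Fixpoint traj (n : nat) (E : graph_seq) (eta alpha : nat -> R) (k0 : nat)
  (x0 : nat -> R) (t : nat) : nat -> R :=
  match t with
  | O => x0
  | S t' => step n E eta alpha (k0 + t') (traj n E eta alpha k0 x0 t')
  end.

Definition in_A_ave (eta alpha : nat -> R) : Prop :=
  forall k, 0 < eta k <= 1 /\ 0 <= alpha k <= 1 - eta k.

Definition global_consensus (n : nat) (E : graph_seq) (eta alpha : nat -> R) : Prop :=
  forall (k0 : nat) (x0 : nat -> R), exists z : R,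
    forall i, (i < n)%nat -> Un_cv (fun t => traj n E eta alpha k0 x0 t i) z.

Definition union_edge (E : graph_seq) (k1 k2 j i : nat) : Prop :=
  exists k, (k1 <= k <= k2)%nat /\ E k j i = true.

Inductive reach (n : nat) (r : nat -> nat -> Prop) : nat -> nat -> Prop :=
  | reach_refl : forall i, reach n r i i
  | reach_step : forall i j l, reach n r i j -> (l < n)%nat -> r j l -> reach n r i l.

Definition strongly_connected (n : nat) (r : nat -> nat -> Prop) : Prop :=
  forall i j, (i < n)%nat -> (j < n)%nat -> reach n r i j.

Definition UJSC (n : nat) (E : graph_seq) (B : nat) : Prop :=
  (1 <= B)%nat /\
  forall k, strongly_connected n (union_edge E k (k + B - 1)).

Fixpoint prod_range (f : nat -> R) (a len : nat) : R :=
  match len with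
  | O => 1
  | S l => prod_range f a l * f (a + l)%nat
  end.

Definition block_sum (f : nat -> R) (L N : nat) : R :=
  sum_f_R0 (fun s => prod_range f (s * L) L) N.

Definition block_series_diverges (f : nat -> R) (L : nat) : Prop :=
  cv_infty (block_sum f L).

(* Main.v *)
Require Import Defs.
From Stdlib Require Import Reals Lra Lia List FunctionalExtensionality Classical.
Open Scope R_scope.

Ltac dmm := unfold Rmax, Rmin in *; repeat (let H := fresh in destruct Rle_dec as [H|H]; [|apply Rnot_le_lt in H]); lra.

Lemma fold_max_ge (x : nat -> R) (c : R) (l : list nat) :
  c <= fold_right (fun j acc => Rmax (x j) acc) c l /\
  forall j, In j l -> x j <= fold_right (fun j acc => Rmax (x j) acc) c l.
Proof.
  induction l as [|a l [IH1 IH2]]; simpl.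
  - split; [lra| tauto].
  - split.
    + dmm.
    + intros j [->|Hj]; [dmm|].
      specialize (IH2 j Hj); dmm.
Qed.

Lemma fold_max_le (x : nat -> R) (c b : R) (l : list nat) :
  c <= b -> (forall j, In j l -> x j <= b) ->
  fold_right (fun j acc => Rmax (x j) acc) c l <= b.
Proof.
  induction l as [|a l IH]; simpl; intros Hc H; auto.
  assert (fold_right (fun j acc => Rmax (x j) acc) c l <= b) by auto.
  specialize (H a (or_introl eq_refl)).
  dmm.
Qed.

Lemma fold_min_le (x : nat -> R) (c : R) (l : list nat) :
  fold_right (fun j acc => Rmin (x j) acc) c l <= c /\
  forall j, In j l -> fold_right (fun j acc => Rmin (x j) acc) c l <= x j.
Proof.
  induction l as [|a l [IH1 IH2]]; simpl.
  - split; [lra| tauto].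
  - split.
    + dmm.
    + intros j [->|Hj]; [dmm|].
      specialize (IH2 j Hj); dmm.
Qed.

Lemma fold_min_ge (x : nat -> R) (c b : R) (l : list nat) :
  b <= c -> (forall j, In j l -> b <= x j) ->
  b <= fold_right (fun j acc => Rmin (x j) acc) c l.
Proof.
  induction l as [|a l IH]; simpl; intros Hc H; auto.
  assert (b <= fold_right (fun j acc => Rmin (x j) acc) c l) by auto.
  specialize (H a (or_introl eq_refl)).
  dmm.
Qed.

Lemma fold_min_att (x : nat -> R) (c : R) (l : list nat) :
  fold_right (fun j acc => Rmin (x j) acc) c l = c \/
  exists j, In j l /\ fold_right (fun j acc => Rmin (x j) acc) c l = x j.
Proof.
  induction l as [|a l IH]; simpl; auto.
  destruct (Rle_dec (x a) (fold_right (fun j acc => Rmin (x j) acc) c l)) as [r|r].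
  - right; exists a; split; auto. rewrite Rmin_left; auto.
  - apply Rnot_le_lt in r. rewrite Rmin_right by lra.
    destruct IH as [H|[j [H1 H2]]]; auto. right; exists j; split; auto.
Qed.

Lemma fold_max_neg (x : nat -> R) (c : R) (l : list nat) :
  fold_right (fun j acc => Rmin (- x j) acc) (- c) l
  = - fold_right (fun j acc => Rmax (x j) acc) c l.
Proof.
  induction l as [|a l IH]; simpl; auto.
  rewrite IH. dmm.
Qed.

Lemma fold_min_neg (x : nat -> R) (c : R) (l : list nat) :
  fold_right (fun j acc => Rmax (- x j) acc) (- c) l
  = - fold_right (fun j acc => Rmin (x j) acc) c l.
Proof.
  induction l as [|a l IH]; simpl; auto.
  rewrite IH. dmm.
Qed.

Lemma filter_len_mono (f g : nat -> bool) (l : list nat) :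
  (forall i, In i l -> f i = true -> g i = true) ->
  (length (filter f l) <= length (filter g l))%nat.
Proof.
  induction l as [|a l IH]; simpl; intros H; auto.
  assert (IH' : (length (filter f l) <= length (filter g l))%nat) by auto.
  specialize (H a (or_introl eq_refl)).
  destruct (f a), (g a); simpl; try lia; discriminate (H eq_refl).
Qed.

Lemma filter_len_strict (f g : nat -> bool) (l : list nat) :
  (forall i, In i l -> f i = true -> g i = true) ->
  (exists i, In i l /\ f i = false /\ g i = true) ->
  (length (filter f l) < length (filter g l))%nat.
Proof.
  induction l as [|a l IH]; simpl; intros H [i [Hi [Hf Hg]]]; [contradiction|].
  destruct Hi as [<-|Hi].
  - rewrite Hf, Hg; simpl.
    assert ((length (filter f l) <= length (filter g l))%nat) by (apply filter_len_mono; auto). lia.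
  - assert (IH' : (length (filter f l) < length (filter g l))%nat).
    { apply IH; eauto. }
    specialize (H a (or_introl eq_refl)).
    destruct (f a), (g a); simpl; try lia; discriminate (H eq_refl).
Qed.

Lemma filter_len_le (f : nat -> bool) (l : list nat) :
  (length (filter f l) <= length l)%nat.
Proof. induction l; simpl; [lia|destruct (f a); simpl; lia]. Qed.

Lemma filter_len_lt_ex (f : nat -> bool) (l : list nat) :
  (length (filter f l) < length l)%nat -> exists i, In i l /\ f i = false.
Proof.
  induction l as [|a l IH]; simpl; intros H; [lia|].
  destruct (f a) eqn:Ha.
  - simpl in H. destruct IH as [i [Hi Hf]]; [lia|]. exists i; auto.
  - exists a; auto.
Qed.

Lemma filter_len_pos_ex (f : nat -> bool) (l : list nat) :
  (1 <= length (filter f l))%nat -> exists i, In i l /\ f i = true.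
Proof.
  induction l as [|a l IH]; simpl; intros H; [lia|].
  destruct (f a) eqn:Ha.
  - exists a; auto.
  - destruct IH as [i [Hi Hf]]; auto. exists i; auto.
Qed.

Lemma filter_len_ex_pos (f : nat -> bool) (l : list nat) :
  (exists i, In i l /\ f i = true) -> (1 <= length (filter f l))%nat.
Proof.
  induction l as [|a l IH]; simpl; intros [i [Hi Hf]]; [contradiction|].
  destruct Hi as [<-|Hi].
  - rewrite Hf; simpl; lia.
  - destruct (f a); simpl; [lia|]. apply IH; eauto.
Qed.

Lemma filter_len_full (f : nat -> bool) (l : list nat) :
  (length l <= length (filter f l))%nat -> forall i, In i l -> f i = true.
Proof.
  intros H i Hi. destruct (f i) eqn:Hf; auto.
  assert (length (filter f l) < length l)%nat.
  { clear H. induction l as [|a l IH]; simpl in *; [contradiction|].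
    destruct Hi as [<-|Hi].
    - rewrite Hf. pose proof (filter_len_le f l); lia.
    - specialize (IH Hi). destruct (f a); simpl; lia. }
  lia.
Qed.

Lemma nbr_in_lt n E k i j : (i < n)%nat -> In j (neighbors n E k i) -> (j < n)%nat.
Proof.
  unfold neighbors; intros Hi [->|H]; auto.
  apply filter_In in H as [H _]. apply in_seq in H. lia.
Qed.

Lemma nbr_self n E k i : In i (neighbors n E k i).
Proof. left; auto. Qed.

Lemma nbr_edge n E k i j : (j < n)%nat -> E k j i = true -> In j (neighbors n E k i).
Proof.
  intros Hj He. right. apply filter_In. split; auto. apply in_seq. lia.
Qed.

Lemma nbr_min_le n E k i x j : In j (neighbors n E k i) -> nbr_min n E k i x <= x j.
Proof. intros H. unfold nbr_min. apply (proj2 (fold_min_le x (x i) _)); auto. Qed.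

Lemma nbr_max_ge n E k i x j : In j (neighbors n E k i) -> x j <= nbr_max n E k i x.
Proof. intros H. unfold nbr_max. apply (proj2 (fold_max_ge x (x i) _)); auto. Qed.

Lemma nbr_max_le n E k i x b : (i < n)%nat -> (forall j, (j < n)%nat -> x j <= b) ->
  nbr_max n E k i x <= b.
Proof.
  intros Hi H. unfold nbr_max. apply fold_max_le; auto.
  intros j Hj. apply H. eapply nbr_in_lt; eauto.
Qed.

Lemma nbr_min_ge n E k i x b : (i < n)%nat -> (forall j, (j < n)%nat -> b <= x j) ->
  b <= nbr_min n E k i x.
Proof.
  intros Hi H. unfold nbr_min. apply fold_min_ge; auto.
  intros j Hj. apply H. eapply nbr_in_lt; eauto.
Qed.

Lemma step_le n E eta alpha k x i b : in_A_ave eta alpha -> (i < n)%nat ->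
  (forall j, (j < n)%nat -> x j <= b) -> step n E eta alpha k x i <= b.
Proof.
  intros HA Hi H. destruct (HA k) as [H1 H2]. unfold step.
  pose proof (nbr_max_le n E k i x b Hi H).
  pose proof (nbr_min_le n E k i x i (nbr_self _ _ _ _)).
  pose proof (H i Hi).
  assert (eta k * x i <= eta k * b) by (apply Rmult_le_compat_l; lra).
  assert (alpha k * nbr_min n E k i x <= alpha k * b) by (apply Rmult_le_compat_l; lra).
  assert ((1 - eta k - alpha k) * nbr_max n E k i x <= (1 - eta k - alpha k) * b)
    by (apply Rmult_le_compat_l; lra).
  lra.
Qed.

Lemma step_ge n E eta alpha k x i b : in_A_ave eta alpha -> (i < n)%nat ->
  (forall j, (j < n)%nat -> b <= x j) -> b <= step n E eta alpha k x i.
Proof.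
  intros HA Hi H. destruct (HA k) as [H1 H2]. unfold step.
  pose proof (nbr_min_ge n E k i x b Hi H).
  pose proof (nbr_max_ge n E k i x i (nbr_self _ _ _ _)).
  pose proof (H i Hi).
  assert (eta k * b <= eta k * x i) by (apply Rmult_le_compat_l; lra).
  assert (alpha k * b <= alpha k * nbr_min n E k i x) by (apply Rmult_le_compat_l; lra).
  assert ((1 - eta k - alpha k) * b <= (1 - eta k - alpha k) * nbr_max n E k i x)
    by (apply Rmult_le_compat_l; lra).
  lra.
Qed.

Lemma step_key n E eta alpha k x i j M0 : in_A_ave eta alpha -> (i < n)%nat ->
  In j (neighbors n E k i) -> (forall l, (l < n)%nat -> x l <= M0) ->
  alpha k * (M0 - x j) <= M0 - step n E eta alpha k x i.
Proof.
  intros HA Hi Hj H. destruct (HA k) as [H1 H2]. unfold step.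
  pose proof (nbr_max_le n E k i x M0 Hi H).
  pose proof (nbr_min_le n E k i x j Hj).
  pose proof (H i Hi).
  assert (eta k * x i <= eta k * M0) by (apply Rmult_le_compat_l; lra).
  assert (alpha k * nbr_min n E k i x <= alpha k * x j) by (apply Rmult_le_compat_l; lra).
  assert ((1 - eta k - alpha k) * nbr_max n E k i x <= (1 - eta k - alpha k) * M0)
    by (apply Rmult_le_compat_l; lra).
  lra.
Qed.

Lemma traj_le n E eta alpha k0 x0 t b : in_A_ave eta alpha ->
  (forall j, (j < n)%nat -> traj n E eta alpha k0 x0 t j <= b) ->
  forall d j, (j < n)%nat -> traj n E eta alpha k0 x0 (t + d) j <= b.
Proof.
  intros HA H d. induction d; intros j Hj.
  - rewrite Nat.add_0_r; auto.
  - rewrite Nat.add_succ_r. simpl. apply step_le; auto.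
Qed.

Lemma traj_ge n E eta alpha k0 x0 t b : in_A_ave eta alpha ->
  (forall j, (j < n)%nat -> b <= traj n E eta alpha k0 x0 t j) ->
  forall d j, (j < n)%nat -> b <= traj n E eta alpha k0 x0 (t + d) j.
Proof.
  intros HA H d. induction d; intros j Hj.
  - rewrite Nat.add_0_r; auto.
  - rewrite Nat.add_succ_r. simpl. apply step_ge; auto.
Qed.

Definition Mx (n : nat) (x : nat -> R) : R :=
  fold_right (fun j acc => Rmax (x j) acc) (x 0%nat) (seq 0 n).
Definition mn (n : nat) (x : nat -> R) : R :=
  fold_right (fun j acc => Rmin (x j) acc) (x 0%nat) (seq 0 n).

Lemma Mx_ge n x i : (i < n)%nat -> x i <= Mx n x.
Proof. intros H. apply (proj2 (fold_max_ge _ _ _)). apply in_seq; lia. Qed.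

Lemma mn_le n x i : (i < n)%nat -> mn n x <= x i.
Proof. intros H. apply (proj2 (fold_min_le _ _ _)). apply in_seq; lia. Qed.

Lemma Mx_le n x b : (0 < n)%nat -> (forall i, (i < n)%nat -> x i <= b) -> Mx n x <= b.
Proof.
  intros Hn H. apply fold_max_le; auto. intros j Hj; apply H. apply in_seq in Hj; lia.
Qed.

Lemma mn_ge n x b : (0 < n)%nat -> (forall i, (i < n)%nat -> b <= x i) -> b <= mn n x.
Proof.
  intros Hn H. apply fold_min_ge; auto. intros j Hj; apply H. apply in_seq in Hj; lia.
Qed.

Lemma mn_att n x : (0 < n)%nat -> exists i, (i < n)%nat /\ x i = mn n x.
Proof.
  intros Hn. unfold mn. destruct (fold_min_att x (x 0%nat) (seq 0 n)) as [H|[j [H1 H2]]].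
  - exists 0%nat; auto.
  - exists j; split; auto. apply in_seq in H1; lia.
Qed.

Lemma prod_split f a l1 l2 :
  prod_range f a (l1 + l2) = prod_range f a l1 * prod_range f (a + l1) l2.
Proof.
  induction l2.
  - rewrite Nat.add_0_r; simpl; ring.
  - rewrite Nat.add_succ_r; simpl. rewrite IHl2, Nat.add_assoc. ring.
Qed.

Lemma prod_bounds f a l : (forall k, 0 <= f k <= 1) -> 0 <= prod_range f a l <= 1.
Proof.
  intros H. induction l; simpl; [lra|]. specialize (H (a + l)%nat).
  split; [apply Rmult_le_pos; lra|].
  assert (prod_range f a l * f (a + l)%nat <= 1 * 1) by (apply Rmult_le_compat; lra). lra.
Qed.

Lemma reach_cut n (r : nat -> nat -> Prop) (P : nat -> Prop) i l :
  reach n r i l -> P i -> ~ P l ->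
  exists j l', P j /\ ~ P l' /\ (l' < n)%nat /\ r j l'.
Proof.
  induction 1 as [i|i j l Hr IH Hl Hjl]; intros Hi Hn; [contradiction|].
  destruct (classic (P j)) as [Hj|Hj].
  - exists j, l; auto.
  - apply IH; auto.
Qed.



Lemma good_step n E eta alpha k0 x0 M0 T s d i j :
  in_A_ave eta alpha -> (i < n)%nat ->
  (forall l, (l < n)%nat -> traj n E eta alpha k0 x0 (s + d) l <= M0) ->
  In j (neighbors n E (k0 + (s + d)) i) ->
  prod_range alpha (k0 + s) d * T <= M0 - traj n E eta alpha k0 x0 (s + d) j ->
  prod_range alpha (k0 + s) (S d) * T <= M0 - traj n E eta alpha k0 x0 (s + S d) i.
Proof.
  intros HA Hi Hb Hj Hg.
  rewrite Nat.add_succ_r. simpl.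
  pose proof (step_key n E eta alpha (k0 + (s + d)) _ i j M0 HA Hi Hj Hb) as K.
  rewrite Nat.add_assoc in K |- *.
  destruct (HA (k0 + s + d)%nat) as [_ [Ha _]].
  assert (alpha (k0 + s + d)%nat * (prod_range alpha (k0 + s) d * T) <=
          alpha (k0 + s + d)%nat * (M0 - traj n E eta alpha k0 x0 (s + d) j))
    by (apply Rmult_le_compat_l; lra).
  lra.
Qed.

Lemma good_many n E eta alpha k0 x0 M0 T t0 s d i :
  in_A_ave eta alpha -> (t0 <= s)%nat -> (i < n)%nat ->
  (forall u l, (t0 <= u)%nat -> (l < n)%nat -> traj n E eta alpha k0 x0 u l <= M0) ->
  prod_range alpha (k0 + s) d * T <= M0 - traj n E eta alpha k0 x0 (s + d) i ->
  forall e, prod_range alpha (k0 + s) (d + e) * T <= M0 - traj n E eta alpha k0 x0 (s + (d + e)) i.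
Proof.
  intros HA Hs Hi HB Hg e. induction e.
  - rewrite Nat.add_0_r; auto.
  - rewrite Nat.add_succ_r. eapply good_step; eauto.
    + intros l Hl; apply HB; auto; lia.
    + apply nbr_self.
Qed.

Definition fT n E eta alpha k0 x0 M0 s T : nat -> bool :=
  fun i => if Rle_dec T (M0 - traj n E eta alpha k0 x0 s i) then true else false.

Lemma fT_true n E eta alpha k0 x0 M0 s T i :
  fT n E eta alpha k0 x0 M0 s T i = true <-> T <= M0 - traj n E eta alpha k0 x0 s i.
Proof. unfold fT; destruct Rle_dec; split; intros; auto; try discriminate; contradiction. Qed.

Lemma window n E B eta alpha k0 x0 M0 T t0 s :
  UJSC n E B -> in_A_ave eta alpha -> (t0 <= s)%nat ->
  (forall u l, (t0 <= u)%nat -> (l < n)%nat -> traj n E eta alpha k0 x0 u l <= M0) ->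
  let c1 := length (filter (fT n E eta alpha k0 x0 M0 s T) (seq 0 n)) in
  let c2 := length (filter (fT n E eta alpha k0 x0 M0 (s + B) (prod_range alpha (k0 + s) B * T)) (seq 0 n)) in
  (c1 <= c2)%nat /\ ((1 <= c1)%nat -> (c1 < n)%nat -> (c1 < c2)%nat).
Proof.
  intros [HB1 HU] HA Hs HB c1 c2.
  assert (G0 : forall i, (i < n)%nat -> fT n E eta alpha k0 x0 M0 s T i = true ->
             forall e, prod_range alpha (k0 + s) (0 + e) * T <=
                       M0 - traj n E eta alpha k0 x0 (s + (0 + e)) i).
  { intros i Hi Hf e. eapply good_many; eauto.
    apply fT_true in Hf. simpl. rewrite Nat.add_0_r. lra. }
  assert (Mono : forall i, In i (seq 0 n) -> fT n E eta alpha k0 x0 M0 s T i = true ->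
     fT n E eta alpha k0 x0 M0 (s + B) (prod_range alpha (k0 + s) B * T) i = true).
  { intros i Hi Hf. apply in_seq in Hi. apply fT_true. apply (G0 i ltac:(lia) Hf B). }
  split.
  - apply filter_len_mono; auto.
  - intros H1 H2. apply filter_len_strict; auto.
    destruct (filter_len_pos_ex _ _ H1) as [i [Hi Hfi]].
    assert (H2' : (c1 < length (seq 0 n))%nat) by (rewrite length_seq; auto).
    destruct (filter_len_lt_ex _ _ H2') as [l [Hl Hfl]].
    apply in_seq in Hi, Hl.
    destruct (reach_cut n _ (fun v => (v < n)%nat /\ fT n E eta alpha k0 x0 M0 s T v = true) i l
                (HU (k0 + s)%nat i l ltac:(lia) ltac:(lia))) as [j [l' [[Hj Hfj] [Hnl' [Hl' [k [Hk Ek]]]]]]].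
    + split; auto; lia.
    + intros [_ Hc]; congruence.
    + exists l'. split; [apply in_seq; lia|]. split.
      * destruct (fT n E eta alpha k0 x0 M0 s T l') eqn:Q; auto. exfalso; apply Hnl'; auto.
      * apply fT_true.
        set (d := (k - (k0 + s))%nat).
        assert (Gd := G0 j Hj Hfj d). simpl in Gd.
        assert (GS : prod_range alpha (k0 + s) (S d) * T <=
                     M0 - traj n E eta alpha k0 x0 (s + S d) l').
        { eapply good_step; eauto.
          - intros l0 Hl0; apply HB; auto; lia.
          - replace (k0 + (s + d))%nat with k by lia. apply nbr_edge; auto. }
        assert (GB := good_many n E eta alpha k0 x0 M0 T t0 s (S d) l' HA Hs Hl' HB GS (B - S d)).
        replace (S d + (B - S d))%nat with B in GB by lia. exact GB.
Qed.

Lemma block n E B eta alpha k0 x0 t0 :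
  (2 <= n)%nat -> UJSC n E B -> in_A_ave eta alpha ->
  forall i, (i < n)%nat ->
  prod_range alpha (k0 + t0) ((n - 1) * B) *
    (Mx n (traj n E eta alpha k0 x0 t0) - mn n (traj n E eta alpha k0 x0 t0))
  <= Mx n (traj n E eta alpha k0 x0 t0) - traj n E eta alpha k0 x0 (t0 + (n - 1) * B) i.
Proof.
  intros Hn HU HA.
  set (X := traj n E eta alpha k0 x0).
  set (M0 := Mx n (X t0)). set (D := M0 - mn n (X t0)).
  assert (HB : forall u l, (t0 <= u)%nat -> (l < n)%nat -> X u l <= M0).
  { intros u l Hu Hl. replace u with (t0 + (u - t0))%nat by lia.
    apply traj_le; auto. intros j Hj; apply Mx_ge; auto. }
  set (cnt := fun c => length (filter (fT n E eta alpha k0 x0 M0 (t0 + c * B)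
                 (prod_range alpha (k0 + t0) (c * B) * D)) (seq 0 n))).
  assert (Hle : forall c, (cnt c <= n)%nat).
  { intros c. unfold cnt. match goal with |- (length (filter ?f _) <= _)%nat =>
      pose proof (filter_len_le f (seq 0 n)) as H end. rewrite length_seq in H. exact H. }
  assert (Cl : forall c, (c <= n - 1)%nat -> (c + 1 <= cnt c)%nat).
  { induction c; intros Hc.
    - unfold cnt. apply filter_len_ex_pos.
      destruct (mn_att n (X t0) ltac:(lia)) as [i0 [Hi0 Ei0]].
      exists i0. split; [apply in_seq; lia|]. apply fT_true. simpl.
      rewrite Nat.add_0_r. fold X. rewrite Ei0. unfold D. lra.
    - specialize (IHc ltac:(lia)).
      destruct (window n E B eta alpha k0 x0 M0 (prod_range alpha (k0 + t0) (c * B) * D)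
                  t0 (t0 + c * B) HU HA ltac:(lia) HB) as [W1 W2].
      replace (t0 + c * B + B)%nat with (t0 + S c * B)%nat in W1, W2 by lia.
      replace (prod_range alpha (k0 + (t0 + c * B)) B * (prod_range alpha (k0 + t0) (c * B) * D))
        with (prod_range alpha (k0 + t0) (S c * B) * D) in W1, W2.
      2:{ replace (S c * B)%nat with (c * B + B)%nat by lia. rewrite prod_split.
          rewrite Nat.add_assoc. ring. }
      fold (cnt c) in W1, W2. fold (cnt (S c)) in W1, W2.
      destruct (Nat.lt_ge_cases (cnt c) n) as [Hlt|Hge].
      + specialize (W2 ltac:(lia) Hlt). lia.
      + lia. }
  intros i Hi.
  assert (Hc := Cl (n - 1)%nat (le_n _)).
  assert (Hall : forall j, In j (seq 0 n) ->
     fT n E eta alpha k0 x0 M0 (t0 + (n - 1) * B) (prod_range alpha (k0 + t0) ((n - 1) * B) * D) j = true).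
  { apply filter_len_full. rewrite length_seq. fold (cnt (n - 1)%nat). lia. }
  apply fT_true. apply Hall. apply in_seq; lia.
Qed.

Fixpoint psum (f : nat -> R) (N : nat) : R :=
  match N with O => 0 | S N' => psum f N' + f N' end.

Lemma psum_S f N : psum f (S N) = sum_f_R0 f N.
Proof. induction N; simpl in *; [ring|]. rewrite <- IHN. simpl. ring. Qed.

Lemma psum_mono f N d : (forall s, 0 <= f s) -> psum f N <= psum f (N + d).
Proof.
  intros H. induction d; [rewrite Nat.add_0_r; lra|].
  rewrite Nat.add_succ_r; simpl. specialize (H (N + d)%nat). lra.
Qed.

Lemma main_alpha n E B eta alpha :
  (2 <= n)%nat -> UJSC n E B -> in_A_ave eta alpha ->
  block_series_diverges alpha ((n - 1) * B) -> global_consensus n E eta alpha.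
Proof.
  intros Hn HU HA Hdiv k0 x0.
  set (X := traj n E eta alpha k0 x0).
  set (L := ((n - 1) * B)%nat).
  assert (HL : (1 <= L)%nat).
  { destruct HU as [HB1 _]. unfold L. nia. }
  set (Mt := fun t => Mx n (X t)). set (mt := fun t => mn n (X t)).
  set (Dt := fun t => Mt t - mt t).
  assert (F1 : forall t i, (i < n)%nat -> mt t <= X t i <= Mt t).
  { intros t i Hi. split; [apply mn_le|apply Mx_ge]; auto. }
  assert (F2 : forall t d, Mt (t + d)%nat <= Mt t /\ mt t <= mt (t + d)%nat).
  { intros t d. split.
    - apply Mx_le; [lia|]. intros i Hi. apply traj_le; auto. intros j Hj; apply F1; auto.
    - apply mn_ge; [lia|]. intros i Hi. apply traj_ge; auto. intros j Hj; apply F1; auto. }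
  assert (F6 : forall t, 0 <= Dt t).
  { intros t. destruct (F1 t 0%nat ltac:(lia)). unfold Dt; lra. }
  assert (F6' : forall t d, Dt (t + d)%nat <= Dt t).
  { intros t d. destruct (F2 t d). unfold Dt; lra. }
  assert (F3 : forall t0, Dt (t0 + L)%nat <= (1 - prod_range alpha (k0 + t0) L) * Dt t0).
  { intros t0. pose proof (block n E B eta alpha k0 x0 t0 Hn HU HA) as Hb.
    fold X L in Hb.
    assert (Mt (t0 + L)%nat <= Mt t0 - prod_range alpha (k0 + t0) L * Dt t0).
    { apply Mx_le; [lia|]. intros i Hi. specialize (Hb i Hi). unfold Dt, Mt, mt, X in *. nra. }
    destruct (F2 t0 L). assert (Dt t0 = Mt t0 - mt t0) by reflexivity. assert (Dt (t0 + L)%nat = Mt (t0 + L)%nat - mt (t0 + L)%nat) by reflexivity. nra. }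
  assert (Pb : forall a l, 0 <= prod_range alpha a l <= 1).
  { intros a l. apply prod_bounds. intros k. destruct (HA k). lra. }
  set (P := fun s => prod_range alpha (s * L) L).
  set (ts := fun s => (s * L - k0)%nat).
  assert (F5 : forall r, Dt (ts (k0 + r)%nat) * (1 + psum P (k0 + r) - psum P k0) <= Dt (ts k0)).
  { induction r.
    - rewrite Nat.add_0_r. lra.
    - assert (Hts : ts (k0 + S r)%nat = (ts (k0 + r)%nat + L)%nat).
      { unfold ts. assert (k0 + r <= (k0 + r) * L)%nat by nia. nia. }
      assert (Hk : (k0 + ts (k0 + r)%nat)%nat = ((k0 + r) * L)%nat).
      { unfold ts. assert (k0 + r <= (k0 + r) * L)%nat by nia. nia. }
      rewrite Hts. pose proof (F3 (ts (k0 + r)%nat)) as H3. rewrite Hk in H3.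
      fold (P (k0 + r)%nat) in H3.
      rewrite Nat.add_succ_r. simpl psum.
      pose proof (psum_mono P k0 r ltac:(intros s; apply Pb)) as HS.
      pose proof (Pb ((k0 + r) * L)%nat L) as Hp. fold (P (k0 + r)%nat) in Hp.
      set (S0 := psum P (k0 + r)%nat - psum P k0) in *.
      set (p := P (k0 + r)%nat) in *.
      set (D1 := Dt (ts (k0 + r)%nat + L)%nat) in *.
      set (D0 := Dt (ts (k0 + r)%nat)) in *.
      assert (0 <= D1) by apply F6. assert (0 <= D0) by apply F6. assert (0 <= S0) by (unfold S0; lra).
      assert (D1 * (1 + S0 + p) <= (1 - p) * D0 * (1 + S0 + p))
        by (apply Rmult_le_compat_r; lra).
      assert (0 <= p * D0 * (S0 + p)) by (apply Rmult_le_pos; [apply Rmult_le_pos|]; lra).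
      replace (1 + (psum P (k0 + r)%nat + p) - psum P k0) with (1 + S0 + p) by (unfold S0; ring).
      replace (1 + psum P (k0 + r)%nat - psum P k0) with (1 + S0) in IHr by (unfold S0; ring). nra. }
  assert (F7 : Un_cv Dt 0).
  { intros eps Heps.
    destruct (Hdiv (psum P k0 + Dt (ts k0) / eps)) as [N HN].
    exists (ts (k0 + S N)%nat). intros t Ht.
    specialize (HN N (le_n _)). unfold block_sum in HN. fold L in HN.
    change (fun s => prod_range alpha (s * L) L) with P in HN.
    rewrite <- psum_S in HN.
    pose proof (psum_mono P (S N) k0 ltac:(intros s; apply Pb)) as HM.
    replace (S N + k0)%nat with (k0 + S N)%nat in HM by lia.
    specialize (F5 (S N)).
    set (S0 := psum P (k0 + S N)%nat - psum P k0) in *.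
    set (D1 := Dt (ts (k0 + S N)%nat)) in *.
    set (D0 := Dt (ts k0)) in *.
    assert (HS0 : D0 / eps < S0) by (unfold S0; lra).
    assert (D0 < S0 * eps).
    { apply Rmult_lt_compat_r with (r := eps) in HS0; auto.
      unfold Rdiv in HS0. rewrite Rmult_assoc, Rinv_l, Rmult_1_r in HS0; lra. }
    assert (0 <= D1) by apply F6. assert (0 <= D0) by apply F6.
    replace (1 + psum P (k0 + S N)%nat - psum P k0) with (1 + S0) in F5 by (unfold S0; ring).
    assert (0 <= D0 / eps) by (unfold Rdiv; apply Rmult_le_pos; [lra|left; apply Rinv_0_lt_compat; lra]).
    assert (D1 < eps).
    { destruct (Rlt_or_le D1 eps) as [?|Hc]; auto.
      assert (eps * (1 + S0) <= D1 * (1 + S0)) by (apply Rmult_le_compat_r; lra). nra. }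
    unfold Rdist. rewrite Rminus_0_r.
    replace t with (ts (k0 + S N)%nat + (t - ts (k0 + S N)%nat))%nat by lia.
    rewrite Rabs_right by (apply Rle_ge, F6).
    pose proof (F6' (ts (k0 + S N)%nat) (t - ts (k0 + S N)%nat)%nat) as HH. fold D1 in HH. lra. }
  assert (Hdec : Un_decreasing Mt).
  { intros t. replace (S t) with (t + 1)%nat by lia. apply F2. }
  assert (Hlb : has_lb Mt).
  { exists (- mt 0%nat). intros x [i ->]. unfold opp_seq.
    destruct (F2 0%nat i). destruct (F1 i 0%nat ltac:(lia)). simpl in *. lra. }
  destruct (decreasing_cv Mt Hdec Hlb) as [z Hz].
  exists z. intros i Hi eps Heps.
  destruct (Hz (eps / 2) ltac:(lra)) as [N1 HN1].
  destruct (F7 (eps / 2) ltac:(lra)) as [N2 HN2].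
  exists (max N1 N2). intros t Ht.
  specialize (HN1 t ltac:(lia)). specialize (HN2 t ltac:(lia)).
  unfold Rdist in *. destruct (F1 t i Hi). fold X.
  unfold Dt in HN2. rewrite Rminus_0_r in HN2.
  revert HN1 HN2. unfold Rabs; repeat destruct Rcase_abs; intros; lra.
Qed.

Lemma step_neg n E eta alpha k x :
  step n E eta (fun k => 1 - alpha k - eta k) k (fun j => - x j)
  = fun i => - step n E eta alpha k x i.
Proof.
  apply functional_extensionality; intros i. unfold step.
  assert (H1 : nbr_min n E k i (fun j => - x j) = - nbr_max n E k i x)
    by exact (fold_max_neg x (x i) _).
  assert (H2 : nbr_max n E k i (fun j => - x j) = - nbr_min n E k i x)
    by exact (fold_min_neg x (x i) _).
  rewrite H1, H2. ring.
Qed.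

Lemma traj_neg n E eta alpha k0 x0 t :
  traj n E eta (fun k => 1 - alpha k - eta k) k0 (fun j => - x0 j) t
  = fun i => - traj n E eta alpha k0 x0 t i.
Proof.
  induction t; simpl; auto. rewrite IHt. apply step_neg.
Qed.

Theorem theorem5 (n : nat) (E : graph_seq) (B : nat) (eta alpha : nat -> R) :
  (3 <= n)%nat ->
  UJSC n E B ->
  in_A_ave eta alpha ->
  (block_series_diverges alpha ((n - 1) * B)
   \/ block_series_diverges (fun k => 1 - alpha k - eta k) ((n - 1) * B)) ->
  global_consensus n E eta alpha.
Proof.
  intros Hn HU HA [Hd|Hd].
  - apply (main_alpha n E B); auto; lia.
  - assert (HA' : in_A_ave eta (fun k => 1 - alpha k - eta k)).
    { intros k. destruct (HA k). split; [lra|]. lra. }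
    pose proof (main_alpha n E B eta _ ltac:(lia) HU HA' Hd) as HC.
    intros k0 x0. destruct (HC k0 (fun j => - x0 j)) as [z Hz].
    exists (- z). intros i Hi eps Heps.
    destruct (Hz i Hi eps Heps) as [N HN]. exists N. intros t Ht.
    specialize (HN t Ht). rewrite traj_neg in HN.
    unfold Rdist in *. replace (- traj n E eta alpha k0 x0 t i - z)
      with (- (traj n E eta alpha k0 x0 t i - - z)) in HN by ring.
    rewrite Rabs_Ropp in HN. exact HN.
Qed.
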